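(* Let $\beta=0$, $R\ge0$, and let $D>0$ be odd. Let $\alpha_\infty^D$ be the maximum value of $\alpha_0$ over all numerical walls for the Chern character $(-R,0,D,0)$ on $\mathbb{P}^3$. Then $D-1<\alpha_\infty^D\le D$.
   Context: On $\mathbb{P}^3$ with hyperplane class $H$, Chern characters are the vectors of coefficients of $1,H,H^2,H^3$. For $v=(-R,0,D,0)$ and the Bayer–Macrì–Toda stability conditions $\sigma_{0,\alpha,s}$ ($\alpha,s>0$; central charge $Z=-(\operatorname{ch}_3-(s+\frac16)\alpha^2\operatorname{ch}_1)+\sqrt{-1}(\operatorname{ch}_2-\frac{\alpha^2}{2}\operatorname{ch}_0)$), a numerical wall is a curve $(s+\frac16)\alpha^2=\alpha_0^2/6$ with $\alpha_0^2=6e/c$, where $(r,c,d,e)=\operatorname{ch}(A)$ for some $A\in D^b(\mathbb{P}^3)$ with $c>0$ satisfying $0<d<D$, $0<c(6e)\le\min\{4d^2,4(D-d)^2\}$, and $-\frac{c(2D-2d)}{6e}-R\le r\le\frac{2cd}{6e}$. *)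

(* Defs.v *)
From Stdlib Require Import Reals ZArith.
Open Scope R_scope.

(* (r,c,d,e) is the Chern character of some object of D^b(P^3) iff it lies in
   the Z-span of ch(O), ch(O(1)), ch(O(2)), ch(O(3)) (these generate K_0(P^3),
   and every class in K_0 is the class of an object). *)
Definition is_ch_P3 (r c d e : R) : Prop :=
  exists a0 a1 a2 a3 : Z,
    r = IZR a0 + IZR a1 + IZR a2 + IZR a3 /\
    c = IZR a1 + 2 * IZR a2 + 3 * IZR a3 /\
    d = IZR a1 / 2 + 4 * IZR a2 / 2 + 9 * IZR a3 / 2 /\
    e = IZR a1 / 6 + 8 * IZR a2 / 6 + 27 * IZR a3 / 6.

(* ch(A) = (r,c,d,e) gives a numerical wall for v = (-Rk,0,D,0) (beta = 0). *)
Definition numerical_wall_class (Rk D r c d e : R) : Prop :=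
  is_ch_P3 r c d e /\
  0 < c /\
  0 < d < D /\
  0 < c * (6 * e) /\
  c * (6 * e) <= Rmin (4 * d ^ 2) (4 * (D - d) ^ 2) /\
  - (c * (2 * D - 2 * d)) / (6 * e) - Rk <= r <= 2 * c * d / (6 * e).

Definition wall_alpha0 (c e : R) : R := sqrt (6 * e / c).

Definition is_wall_alpha0 (Rk D a : R) : Prop :=
  exists r c d e, numerical_wall_class Rk D r c d e /\ a = wall_alpha0 c e.

(* Main.v *)
Require Import Defs.
From Stdlib Require Import Reals ZArith Lra Lia Psatz List Classical.
Open Scope R_scope.
Import ListNotations.

Lemma finmax {A : Type} (P : A -> Prop) (f : A -> R) (L : list A) :
  (exists x, In x L /\ P x) ->
  exists x, In x L /\ P x /\ forall y, In y L -> P y -> f y <= f x.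
Proof.
  induction L as [|a L IH]; intros [x [Hx Px]].
  - destruct Hx.
  - destruct (classic (exists x, In x L /\ P x)) as [H|H].
    + destruct (IH H) as [m [Hm [Pm Mm]]].
      destruct (classic (P a)) as [Pa|Pa].
      * destruct (Rle_dec (f a) (f m)).
        -- exists m; split; [right; exact Hm|split; [exact Pm|]].
           intros y [<-|Hy] Py; [lra|auto].
        -- exists a; split; [left; reflexivity|split; [exact Pa|]].
           intros y [<-|Hy] Py; [lra|]. specialize (Mm y Hy Py); lra.
      * exists m; split; [right; exact Hm|split; [exact Pm|]].
        intros y [<-|Hy] Py; [contradiction|auto].
    + exists a. destruct Hx as [<-|Hx]; [|exfalso; apply H; eauto].
      split; [left; reflexivity|split; [exact Px|]].
      intros y [<-|Hy] Py; [lra|exfalso; apply H; eauto].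
Qed.

Definition rng (N : Z) : list Z := map Z.of_nat (seq 1 (Z.to_nat N)).

Lemma in_rng N z : (1 <= z <= N)%Z -> In z (rng N).
Proof.
  intros Hz. unfold rng. apply in_map_iff. exists (Z.to_nat z).
  split; [lia|]. apply in_seq. lia.
Qed.

Lemma wall_int Rk D r c d e : 0 < D -> numerical_wall_class Rk D r c d e ->
  exists k n : Z, c = IZR k /\ 6 * e = IZR n /\ (1 <= k)%Z /\ (1 <= n)%Z /\
    IZR k * IZR n <= D ^ 2.
Proof.
  intros HD [[a0 [a1 [a2 [a3 [Hr [Hc [Hd He]]]]]]] [Hc0 [Hd0 [Hce [Hmin Hrr]]]]].
  exists (a1 + 2*a2 + 3*a3)%Z, (a1 + 8*a2 + 27*a3)%Z.
  assert (Ec : c = IZR (a1 + 2*a2 + 3*a3)) by (rewrite ?plus_IZR, ?mult_IZR; lra).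
  assert (Ee : 6 * e = IZR (a1 + 8*a2 + 27*a3)) by (rewrite ?plus_IZR, ?mult_IZR; lra).
  assert (Hk : (1 <= a1 + 2*a2 + 3*a3)%Z).
  { rewrite Ec in Hc0. apply lt_IZR in Hc0. lia. }
  assert (Hn : (1 <= a1 + 8*a2 + 27*a3)%Z).
  { assert (0 < IZR (a1 + 8*a2 + 27*a3)) as H0.
    { rewrite <- Ee. apply IZR_le in Hk. rewrite <- Ec in Hk. nra. }
    apply lt_IZR in H0. lia. }
  split; [exact Ec|split; [exact Ee|split; [exact Hk|split; [exact Hn|]]]].
  rewrite <- Ec, <- Ee.
  eapply Rle_trans; [exact Hmin|].
  unfold Rmin; destruct (Rle_dec _ _); nra.
Qed.

Lemma alpha_le Rk D r c d e : 0 < D -> numerical_wall_class Rk D r c d e ->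
  wall_alpha0 c e <= D.
Proof.
  intros HD W. destruct (wall_int _ _ _ _ _ _ HD W) as [k [n [Ec [Ee [Hk [Hn Hb]]]]]].
  unfold wall_alpha0. rewrite Ee, Ec.
  apply IZR_le in Hk. apply IZR_le in Hn.
  rewrite <- (sqrt_pow2 D) by lra. apply sqrt_le_1_alt.
  apply (Rmult_le_reg_r (IZR k)); [lra|].
  unfold Rdiv. rewrite Rmult_assoc, Rinv_l by lra. nra.
Qed.

Lemma witness (Rk D : Z) : (0 <= Rk)%Z -> (0 < D)%Z -> Z.odd D = true ->
  exists a, is_wall_alpha0 (IZR Rk) (IZR D) a /\ IZR D - 1 < a.
Proof.
  intros HR HD Hodd.
  apply Z.odd_spec in Hodd. destruct Hodd as [j Hj].
  set (q := (j * (2*j - 1) / 3)%Z).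
  assert (Hq1 : (3 * q <= j * (2*j-1))%Z) by (apply Z.mul_div_le; lia).
  assert (Hq2 : (j * (2*j-1) < 3 * q + 3)%Z).
  { pose proof (Z.div_mod (j*(2*j-1)) 3 ltac:(lia)).
    pose proof (Z.mod_pos_bound (j*(2*j-1)) 3 ltac:(lia)). unfold q. lia. }
  assert (Hj0 : (0 <= j)%Z) by lia.
  set (n := (6*j + 1 + 6*q)%Z).
  assert (Hn1 : (1 <= n)%Z) by (unfold n; nia).
  assert (HnD : (n <= D * D)%Z) by (unfold n; subst D; nia).
  assert (HnL : ((D-1)*(D-1) < n)%Z).
  { unfold n; subst D. destruct (Z.eq_dec j 0) as [->|Hj1]; [unfold q in *; simpl in *; lia|nia]. }
  exists (sqrt (IZR n)). split.
  - exists 0, 1, (IZR D / 2), (IZR n / 6). split.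
    + split.
      * exists (-( (1 - 2*(j-3*q) - 3*q) + (j - 3*q) + q))%Z, (1 - 2*(j-3*q) - 3*q)%Z,
          (j - 3*q)%Z, q.
        unfold n; subst D. rewrite ?plus_IZR, ?opp_IZR, ?minus_IZR, ?mult_IZR.
        repeat split; repeat (rewrite ?plus_IZR, ?opp_IZR, ?minus_IZR, ?mult_IZR); field.
      * apply IZR_le in Hn1. apply IZR_lt in HD.
        assert (Hmin : Rmin (4 * (IZR D / 2) ^ 2) (4 * (IZR D - IZR D / 2) ^ 2) = IZR D ^ 2).
        { unfold Rmin; destruct (Rle_dec _ _); field. }
        rewrite Hmin.
        apply IZR_le in HnD. rewrite mult_IZR in HnD.
        apply IZR_le in HR.
        repeat split; try lra.
        -- assert (0 <= 1 * (2 * IZR D - 2 * (IZR D / 2)) / (6 * (IZR n / 6))).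
           { apply Rle_mult_inv_pos; lra. } lra.
        -- apply Rle_mult_inv_pos; lra.
    + unfold wall_alpha0. f_equal. field.
  - apply IZR_lt in HnL. rewrite mult_IZR, minus_IZR in HnL.
    assert (1 <= IZR D) by (apply IZR_le; lia).
    rewrite <- (sqrt_pow2 (IZR D - 1)) by lra.
    apply sqrt_lt_1_alt. split; [apply pow2_ge_0|]. simpl. nra.
Qed.

Theorem lemma4p2 (Rk D : Z) :
  (0 <= Rk)%Z -> (0 < D)%Z -> Z.odd D = true ->
  exists alpha_inf : R,
    is_wall_alpha0 (IZR Rk) (IZR D) alpha_inf /\
    (forall a, is_wall_alpha0 (IZR Rk) (IZR D) a -> a <= alpha_inf) /\
    IZR D - 1 < alpha_inf <= IZR D.
Proof.
  intros HR HD Hodd.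
  assert (HDr : 0 < IZR D) by (apply IZR_lt; lia).
  set (P := fun p : Z * Z => exists r c d e, numerical_wall_class (IZR Rk) (IZR D) r c d e
            /\ c = IZR (fst p) /\ 6 * e = IZR (snd p)).
  set (f := fun p : Z * Z => sqrt (IZR (snd p) / IZR (fst p))).
  set (L := list_prod (rng (D*D)) (rng (D*D))).
  assert (Hin : forall r c d e, numerical_wall_class (IZR Rk) (IZR D) r c d e ->
     exists p, In p L /\ P p /\ wall_alpha0 c e = f p).
  { intros r c d e W.
    destruct (wall_int _ _ _ _ _ _ HDr W) as [k [n [Ec [Ee [Hk [Hn Hb]]]]]].
    assert (Hkn : (k * n <= D * D)%Z).
    { apply le_IZR. rewrite !mult_IZR. simpl in Hb. lra. }
    exists (k, n). split; [|split].
    - apply in_prod; apply in_rng; nia.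
    - exists r, c, d, e. simpl. auto.
    - unfold wall_alpha0, f. simpl. rewrite Ee, Ec. reflexivity. }
  destruct (witness Rk D HR HD Hodd) as [w [[r [c [d [e [W Hw]]]]] Hlow]].
  destruct (Hin r c d e W) as [p0 [Hp0 [Pp0 Fp0]]].
  destruct (finmax P f L (ex_intro _ p0 (conj Hp0 Pp0))) as [m [Hm [Pm Mm]]].
  destruct Pm as [r1 [c1 [d1 [e1 [W1 [Ec1 Ee1]]]]]].
  assert (Fm : f m = wall_alpha0 c1 e1).
  { unfold f, wall_alpha0. rewrite Ee1, Ec1. reflexivity. }
  exists (f m). split; [|split; [|split]].
  - exists r1, c1, d1, e1. auto.
  - intros a [r2 [c2 [d2 [e2 [W2 ->]]]]].
    destruct (Hin r2 c2 d2 e2 W2) as [p [Hp [Pp ->]]]. auto.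
  - subst w. rewrite Fp0 in Hlow. specialize (Mm p0 Hp0 Pp0). lra.
  - rewrite Fm. eapply alpha_le; eauto.
Qed.
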